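(* Let $\mathcal{A}=\{H_1,\dots,H_n\}$ be an essential arrangement in $K^l$. Then $\mathcal{I}(\bar{\mathcal{A}})$ determines $L(\mathcal{A})$, and vice versa.
   Context: Let $K$ be a field and let $\mathcal{A}=\{H_1,\dots,H_n\}$ be an affine arrangement of $n$ distinct, linearly ordered hyperplanes in $K^l$. The lattice of intersections is $L(\mathcal{A})=\{\bigcap_{H\in\mathcal{B}}H \mid \mathcal{B}\subseteq\mathcal{A}\}$ (the empty intersection being $K^l$), partially ordered by reverse inclusion and ranked by codimension. $\mathcal{A}$ is called essential if $L(\mathcal{A})$ contains an element of rank $l$, i.e. some intersection of hyperplanes of $\mathcal{A}$ is a point. The coning $c\mathcal{A}=\{\tilde H_1,\dots,\tilde H_{n+1}\}$ is a central arrangement in $K^{l+1}$, where $\tilde H_{n+1}$ corresponds to the hyperplane at infinity $H_\infty$; $\bar{\mathcal{A}}=\{\bar H_1,\dots,\bar H_{n+1}\}$ denotes the projectivization of $c\mathcal{A}$ in $K\mathbb{P}^l$ (so $\bar H_{n+1}=\bar H_\infty$). With $[n+1]=\{1,\dots,n+1\}$ and $[n+1]^{l+1}_<=\{(i_1,\dots,i_{l+1})\in[n+1]^{l+1} \mid i_1<\cdots<i_{l+1}\}$, define $\mathcal{I}(\bar{\mathcal{A}})=\{(i_1,\dots,i_{l+1})\in[n+1]^{l+1}_< \mid \bar H_{i_1}\cap\cdots\cap\bar H_{i_{l+1}}\neq\emptyset\}$. *)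

(* Defs.v *)
From mathcomp Require Import all_boot all_order all_algebra.
Set Implicit Arguments. Unset Strict Implicit. Unset Printing Implicit Defensive.
Import GRing.Theory.
Local Open Scope ring_scope.

(* Affine hyperplanes in K^l are given by a pair (a, b), a a nonzero row
   vector; the hyperplane is { x in K^l | a . x = b }.  An ordered arrangement of n hyperplanes is a map
   A : 'I_n -> 'rV[K]_l * K (the order is the order of 'I_n). *)

Definition dotv (K : fieldType) (m : nat) (u v : 'rV[K]_m) : K :=
  \sum_(j < m) u 0 j * v 0 j.

Definition on_hyp (K : fieldType) (l : nat) (h : 'rV[K]_l * K) (x : 'rV[K]_l) : Prop :=
  dotv h.1 x = h.2.

Definition is_arrangement (K : fieldType) (l n : nat) (A : 'I_n -> 'rV[K]_l * K) : Prop :=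
  (forall i, (A i).1 != 0) /\
  (forall i j : 'I_n, i != j -> exists x, ~ (on_hyp (A i) x <-> on_hyp (A j) x)).

(* x lies in the intersection of the hyperplanes indexed by B
   (the empty intersection is K^l) *)
Definition inter (K : fieldType) (l n : nat) (A : 'I_n -> 'rV[K]_l * K)
  (B : {set 'I_n}) (x : 'rV[K]_l) : Prop :=
  forall i, i \in B -> on_hyp (A i) x.

(* The intersection poset L(A), recorded with its labelling by subsets of A:
   L_sub A B C  <->  (intersection over B) is contained in (intersection over C). *)
Definition L_sub (K : fieldType) (l n : nat) (A : 'I_n -> 'rV[K]_l * K)
  (B C : {set 'I_n}) : Prop :=
  forall x, inter A B x -> inter A C x.

Definition essential (K : fieldType) (l n : nat) (A : 'I_n -> 'rV[K]_l * K) : Prop :=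
  exists (B : {set 'I_n}) (x : 'rV[K]_l),
    inter A B x /\ forall y, inter A B y -> y = x.

(* Coning: the hyperplane a.x = b becomes the linear hyperplane with normal
   (a, -b) in K^(l+1); index n (= ord_max of 'I_(n+1)) is the hyperplane at
   infinity x_(l+1) = 0, with normal (0,...,0,1). *)
Definition cone_form (K : fieldType) (l n : nat) (A : 'I_n -> 'rV[K]_l * K)
  (k : 'I_n.+1) : 'rV[K]_l.+1 :=
  match unlift ord_max k with
  | Some i => \row_(j < l.+1) match unlift ord_max j with
                              | Some j' => (A i).1 0 j'
                              | None => - (A i).2
                              end
  | None => \row_(j < l.+1) (j == ord_max)%:R
  end.

(* t is in I(bar A): t is strictly increasing and the projective hyperplanes
   bar H_(t 0), ..., bar H_(t l) in KP^l have a common point, i.e. there is a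
   nonzero vector of K^(l+1) on all the corresponding coned hyperplanes.
   (Indices are 0-based: [n+1] is 'I_(n+1), the last one being infinity.) *)
Definition in_I (K : fieldType) (l n : nat) (A : 'I_n -> 'rV[K]_l * K)
  (t : {ffun 'I_l.+1 -> 'I_n.+1}) : Prop :=
  (forall i j : 'I_l.+1, (i < j)%N -> (t i < t j)%N) /\
  exists v : 'rV[K]_l.+1, v != 0 /\ forall k, dotv (cone_form A (t k)) v = 0.

(* Main.v *)
Require Import Defs.
From mathcomp Require Import all_boot all_order all_algebra.
From Stdlib Require Import Classical FunctionalExtensionality PropExtensionality.
Set Implicit Arguments. Unset Strict Implicit. Unset Printing Implicit Defensive.
Import GRing.Theory.
Local Open Scope ring_scope.

Section Arr.
Variables (K : fieldType) (l n : nat) (A : 'I_n -> 'rV[K]_l * K).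
Implicit Types (X Y T : {set 'I_n.+1}) (B C : {set 'I_n}) (v w u : 'rV[K]_l.+1).

Definition cf (k : 'I_n.+1) := cone_form A k.
Definition perp (X : {set 'I_n.+1}) (v : 'rV[K]_l.+1) :=
  forall k, k \in X -> dotv (cf k) v = 0.
Definition NP X := forall v, perp X v -> v = 0.
Definition MX (X : {set 'I_n.+1}) : 'M[K]_(n.+1, l.+1) :=
  \matrix_(k, j) (if k \in X then cf k 0 j else 0).
Definition ext (x : 'rV[K]_l) : 'rV[K]_l.+1 :=
  \row_j (match unlift ord_max j with Some j' => x 0 j' | None => 1 end).
Definition pt (v : 'rV[K]_l.+1) : 'rV[K]_l := \row_j v 0 (lift ord_max j).
Definition lft (B : {set 'I_n}) : {set 'I_n.+1} := [set lift ord_max i | i in B].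

Lemma dotvE m (u v : 'rV[K]_m) : dotv u v = (u *m v^T) 0 0.
Proof. rewrite /dotv !mxE; apply: eq_bigr => j _; by rewrite !mxE. Qed.

Lemma dotvD m (u v w : 'rV[K]_m) : dotv u (v + w) = dotv u v + dotv u w.
Proof. rewrite /dotv -big_split; apply: eq_bigr => j _; by rewrite !mxE mulrDr. Qed.

Lemma dotvZ m (u v : 'rV[K]_m) a : dotv u (a *: v) = a * dotv u v.
Proof. rewrite /dotv mulr_sumr; apply: eq_bigr => j _; by rewrite !mxE mulrCA. Qed.

Lemma dotvN m (u v : 'rV[K]_m) : dotv u (- v) = - dotv u v.
Proof. by rewrite -scaleN1r dotvZ mulN1r. Qed.

Lemma dotvB m (u v w : 'rV[K]_m) : dotv u (v - w) = dotv u v - dotv u w.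
Proof. by rewrite dotvD dotvN. Qed.

Lemma dotv0 m (u : 'rV[K]_m) : dotv u 0 = 0.
Proof. by rewrite -(scale0r 0) dotvZ mul0r. Qed.

Lemma dot_inf (v : 'rV[K]_l.+1) : dotv (cf ord_max) v = v 0 ord_max.
Proof.
rewrite /dotv (bigD1 ord_max) //= big1 ?addr0.
  by rewrite /cf /cone_form unlift_none !mxE eqxx mul1r.
move=> j hj; rewrite /cf /cone_form unlift_none !mxE (negbTE hj); by rewrite mul0r.
Qed.

Lemma widen_lift (j : 'I_l) : widen_ord (leqnSn l) j = lift ord_max j.
Proof. apply: val_inj; exact: (esym (lift_max j)). Qed.

Lemma dot_lift_ext i x :
  dotv (cf (lift ord_max i)) (ext x) = dotv (A i).1 x - (A i).2.
Proof.
rewrite /dotv big_ord_recr /= /cf /cone_form liftK !mxE unlift_none mulr1.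
congr (_ - _); apply: eq_bigr => j _; by rewrite widen_lift !mxE liftK.
Qed.

Lemma on_hypE i x : on_hyp (A i) x <-> dotv (cf (lift ord_max i)) (ext x) = 0.
Proof. rewrite dot_lift_ext /on_hyp; split => [->|/eqP]; first by rewrite subrr.
by rewrite subr_eq0 => /eqP. Qed.

Lemma inter_perp B x : inter A B x <-> perp (lft B) (ext x).
Proof.
split=> [h k /imsetP [i hi ->]|h i hi]; first by apply/on_hypE/h.
apply/on_hypE/h; exact: imset_f.
Qed.

Lemma ext_last x : ext x 0 ord_max = 1.
Proof. by rewrite mxE unlift_none. Qed.

Lemma pt_ext x : pt (ext x) = x.
Proof. apply/rowP => j; by rewrite !mxE liftK. Qed.

Lemma ext_pt (v : 'rV[K]_l.+1) : v 0 ord_max = 1 -> ext (pt v) = v.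
Proof.
move=> h; apply/rowP => j; rewrite !mxE; case: unliftP => [j' ->|->]; by rewrite ?mxE.
Qed.

Lemma ext_inj x y : ext x = ext y -> x = y.
Proof. by move=> h; rewrite -(pt_ext x) h pt_ext. Qed.

Lemma MX_row X k : row k (MX X) = if k \in X then cf k else 0.
Proof. apply/rowP => j; rewrite !mxE; by case: (k \in X); rewrite ?mxE. Qed.

Lemma perp_MX X v : perp X v <-> MX X *m v^T = 0.
Proof.
have E k : (MX X *m v^T) k 0 = if k \in X then dotv (cf k) v else 0.
  rewrite !mxE; case: ifP => hk.
    apply: eq_bigr => j _; by rewrite !mxE hk.
  by apply: big1 => j _; rewrite !mxE hk mul0r.
split=> [h|h k hk].
  apply/matrixP => k j; rewrite (ord1 j) E mxE; case: ifP => // hk; exact: h.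
by move: (E k); rewrite h hk mxE.
Qed.

Lemma spP X (u : 'rV[K]_l.+1) :
  (u <= MX X)%MS <-> forall v, perp X v -> dotv u v = 0.
Proof.
split.
  move=> /submxP [D ->] v /perp_MX h; by rewrite dotvE -mulmxA h mulmx0 mxE.
move=> h; apply: NNPP => hn; move: hn; rewrite submxE => hn.
have [j hj] : exists j, (u *m cokermx (MX X)) 0 j != 0.
  apply: NNPP => hh; apply: hn; apply/eqP; apply/rowP => j; rewrite [RHS]mxE.
  by apply/eqP; apply: NNPP => hj; apply: hh; exists j; apply/negP.
pose v := (col j (cokermx (MX X)))^T.
have hp : perp X v.
  apply/perp_MX; by rewrite /v trmxK colE mulmxA mulmx_coker mul0mx.
move: (h v hp); rewrite dotvE /v trmxK colE mulmxA -colE mxE => e; move: hj; by rewrite e eqxx.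
Qed.


Lemma c_sub (X : {set 'I_n.+1}) k : k \in X -> (cf k <= MX X)%MS.
Proof. move=> hk; rewrite -[cf k](_ : row k (MX X) = _) ?row_sub //; by rewrite MX_row hk. Qed.

Lemma MX_subP (X Y : {set 'I_n.+1}) : (forall k, k \in Y -> (cf k <= MX X)%MS) -> (MX Y <= MX X)%MS.
Proof. move=> h; apply/row_subP => k; rewrite MX_row; case: ifP => hk; [exact: h|exact: sub0mx]. Qed.

Lemma MX_sub (X Y : {set 'I_n.+1}) : X \subset Y -> (MX X <= MX Y)%MS.
Proof. move=> /subsetP h; apply: MX_subP => k /h; exact: c_sub. Qed.

Lemma rank_card X : (\rank (MX X) <= #|X|)%N.
Proof.
have h : (MX X <= \sum_(k in X) <<cf k>>)%MS.
  apply/row_subP => k; rewrite MX_row; case: ifP => hk; last exact: sub0mx.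
  apply: (sumsmx_sup k) => //; by rewrite genmxE.
apply: leq_trans (mxrankS h) _.
apply: leq_trans (leq_of_leqif (mxrank_sum_leqif _)) _ => /=.
rewrite -sum1_card; apply: leq_sum => k _; rewrite genmxE rank_rV; by case: (cf k != 0).
Qed.

Lemma NP_rank X : NP X <-> \rank (MX X) = l.+1.
Proof.
split=> [h|h v /perp_MX hv].
  apply/eqP; rewrite eqn_leq rank_leq_col /=; apply: NNPP => /negP; rewrite -ltnNge => hr.
  have hk : kermx (MX X)^T != 0.
    by rewrite -mxrank_eq0 mxrank_ker mxrank_tr -lt0n subn_gt0.
  have [i hi] : exists i, row i (kermx (MX X)^T) != 0.
    apply: NNPP => hh; move/negP: hk; apply; apply/eqP/row_matrixP => i.
    rewrite row0; apply/eqP; apply: NNPP => hi; apply: hh; exists i; exact/negP.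
  move/negP: hi; apply; apply/eqP; apply: h; apply/perp_MX.
  have := row_sub i (kermx (MX X)^T); rewrite sub_kermx => /eqP e.
  apply: trmx_inj; by rewrite trmx_mul trmxK e trmx0.
apply: NNPP => /eqP hv0.
have : (v <= kermx (MX X)^T)%MS.
  rewrite sub_kermx; apply/eqP; apply: trmx_inj; by rewrite trmx_mul trmxK hv trmx0.
move/mxrankS; rewrite mxrank_ker mxrank_tr h subnn rank_rV; by rewrite hv0.
Qed.

Lemma small_nz X : (#|X| <= l)%N -> exists v, v != 0 /\ perp X v.
Proof.
move=> hX; apply: NNPP => hn.
have : NP X.
  move=> v hv; apply: NNPP => /eqP hv0; apply: hn; by exists v.
move/NP_rank => e; have := rank_card X; rewrite e => h.
by have := leq_trans h hX; rewrite ltnn.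
Qed.

Lemma perp_sub (X Y : {set 'I_n.+1}) v : X \subset Y -> perp Y v -> perp X v.
Proof. move=> /subsetP h hY k hk; exact: hY (h _ hk). Qed.

Definition img (t : {ffun 'I_l.+1 -> 'I_n.+1}) : {set 'I_n.+1} := [set t i | i : 'I_l.+1].
Definition strict (t : {ffun 'I_l.+1 -> 'I_n.+1}) := forall i j : 'I_l.+1, (i < j)%N -> (t i < t j)%N.

Lemma in_I_img t : in_I A t <-> strict t /\ exists v, v != 0 /\ perp (img t) v.
Proof.
split=> [[hs [v [hv h]]]|[hs [v [hv h]]]]; split=> //; exists v; split=> //.
  move=> k /imsetP [i _ ->]; exact: h.
move=> k; apply: h; exact: imset_f.
Qed.

Lemma sorted_enum_ex (T : {set 'I_n.+1}) : #|T| = l.+1 ->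
  exists t, strict t /\ img t = T.
Proof.
move=> hT; pose s := enum T.
have hs : size s = l.+1 by rewrite /s -cardE.
have so : sorted (fun a b : 'I_n.+1 => (a < b)%N) s.
  rewrite /s /enum_mem -enumT; apply: sorted_filter; first by move=> a b c; exact: ltn_trans.
  have := iota_ltn_sorted 0 n.+1; by rewrite -val_enum_ord sorted_map.
exists [ffun i : 'I_l.+1 => nth ord0 s i]; split.
  move=> i j hij; rewrite !ffunE; apply: (sorted_ltn_nth _ _ so) => //; first by move=> a b c; exact: ltn_trans.
    by rewrite inE hs.
  by rewrite inE hs.
apply/setP => x; apply/imsetP/idP.
  move=> [i _ ->]; rewrite ffunE -(mem_enum (mem T)) -/s; apply: mem_nth; by rewrite hs.
move=> hx; have hx' : x \in s by rewrite /s mem_enum.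
have hi : (index x s < l.+1)%N by rewrite -hs index_mem.
exists (Ordinal hi) => //; by rewrite ffunE /= nth_index.
Qed.

Lemma perp_mem X v : perp X v <-> forall k, k \in X -> dotv (cf k) v = 0.
Proof. by []. Qed.

Lemma perpD X u v : perp X u -> perp X v -> perp X (u + v).
Proof. move=> hu hv k hk; by rewrite dotvD hu ?hv ?addr0. Qed.

Lemma perpZ X a v : perp X v -> perp X (a *: v).
Proof. move=> hv k hk; by rewrite dotvZ hv ?mulr0. Qed.

Lemma perpB X u v : perp X u -> perp X v -> perp X (u - v).
Proof. move=> hu hv k hk; by rewrite dotvB hu ?hv ?subrr. Qed.

Lemma ess_NP : essential A -> NP setT.
Proof.
move=> [B0 [x0 [hx0 hu]]] v hv.
have v0 : v 0 ord_max = 0 by rewrite -dot_inf; apply: hv; rewrite inE.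
pose u := ext x0 + v.
have u1 : u 0 ord_max = 1 by rewrite /u mxE ext_last v0 addr0.
have : inter A B0 (pt u).
  apply/inter_perp; rewrite ext_pt //; apply: perpD; first exact/inter_perp.
  apply: perp_sub hv; exact: subsetT.
move/hu => e; move: (ext_pt u1); rewrite e /u => e'.
have := congr1 (fun w => w - ext x0) e'; by rewrite /= subrr [_ + v]addrC addrK.
Qed.

Lemma add_indep J b : \rank (MX J) = #|J| -> ~ (cf b <= MX J)%MS ->
  \rank (MX (b |: J)) = #|b |: J|.
Proof.
move=> hJ hb.
have bJ : b \notin J by apply/negP => h; apply: hb; exact: c_sub.
have hc : #|b |: J| = #|J|.+1 by rewrite cardsU1 bJ.
apply/eqP; rewrite eqn_leq rank_card hc -hJ; apply: rank_ltmx.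
rewrite ltmxE MX_sub ?subsetUr //=; apply/negP => h; apply: hb.
apply: submx_trans h; apply: c_sub; by rewrite setU11.
Qed.

Lemma greedy (s : seq 'I_n.+1) J : \rank (MX J) = #|J| ->
  exists J' : {set 'I_n.+1}, [/\ J \subset J', J' \subset J :|: [set x in s], \rank (MX J') = #|J'|
    & forall b, b \in s -> (cf b <= MX J')%MS].
Proof.
elim: s J => [|b s IH] J hJ.
  exists J; split=> //; by rewrite subsetUl.
case: (boolP (cf b <= MX J)%MS) => hb.
  have [J' [h1 h2 h3 h4]] := IH J hJ; exists J'; split=> //.
    apply: subset_trans h2 _; apply/subsetP => x; rewrite !inE => /orP [->|->]; by rewrite ?orbT.
  move=> b'; rewrite inE => /orP [/eqP ->|]; last exact: h4.
  exact: submx_trans hb (MX_sub h1).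
have hJ1 := add_indep hJ (elimN idP hb).
have [J' [h1 h2 h3 h4]] := IH _ hJ1; exists J'; split=> //.
- exact: subset_trans (subsetUr _ _) h1.
- apply: subset_trans h2 _; apply/subsetP => x; rewrite !inE => /orP [/orP [->|->]|->] //;
  by rewrite ?orbT.
- move=> b'; rewrite inE => /orP [/eqP ->|]; last exact: h4.
  apply: c_sub; apply: (subsetP h1); by rewrite setU11.
Qed.

Lemma not_NP X : ~ NP X -> exists v, v != 0 /\ perp X v.
Proof.
move=> h; apply: NNPP => hn; apply: h => v hv; apply: NNPP => /eqP hv0; apply: hn.
by exists v.
Qed.

Definition IndI (R : {ffun 'I_l.+1 -> 'I_n.+1} -> Prop) (T : {set 'I_n.+1}) :=
  ~ exists t, R t /\ img t = T.

Definition QI (R : {ffun 'I_l.+1 -> 'I_n.+1} -> Prop) (X : {set 'I_n.+1}) k :=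
  ~ exists T : {set 'I_n.+1}, [/\ #|T| = l.+1, IndI R T, k \in T &
      forall b, b \in X -> b \in T :\ k \/ ~ IndI R (b |: (T :\ k))].


Lemma IndI_NP T : #|T| = l.+1 -> IndI (in_I A) T <-> NP T.
Proof.
move=> hT; split=> [h v hv|h [t [/in_I_img [hs [v [hv0 hv]]] e]]].
  apply: NNPP => /eqP hv0; apply: h.
  have [t [hs e]] := sorted_enum_ex hT; exists t; split=> //.
  apply/in_I_img; split=> //; exists v; by rewrite e.
by move: hv0; rewrite (h v) ?eqxx // -e.
Qed.

Lemma IndI_of_NP T : NP T -> IndI (in_I A) T.
Proof. move=> h [t [/in_I_img [hs [v [hv0 hv]]] e]]; by move: hv0; rewrite (h v) ?eqxx // -e. Qed.

Lemma sp_QI X k : essential A -> (cf k <= MX X)%MS <-> QI (in_I A) X k.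
Proof.
move=> ess; split.
  move=> h [T [hT hI hk hb]].
  have NPT := (IndI_NP hT).1 hI.
  have hTk : #|T :\ k| = l by move: hT; rewrite (cardsD1 k) hk add1n => -[].
  have [v [hv0 hv]] := small_nz (eq_leq hTk).
  have perpT : forall w, perp (T :\ k) w -> dotv (cf k) w = 0 -> w = 0.
    move=> w hw hkw; apply: NPT => k' hk'; case: (eqVneq k' k) => [->//|ne].
    apply: hw; by rewrite !inE ne.
  have ckv : dotv (cf k) v != 0.
    apply/negP => /eqP e; move/negP: hv0; apply; apply/eqP; exact: perpT.
  have od : forall w, perp (T :\ k) w -> w = (dotv (cf k) w / dotv (cf k) v) *: v.
    move=> w hw; apply/eqP; rewrite -subr_eq0; apply/eqP; apply: perpT.
      apply: perpB => //; exact: perpZ.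
    by rewrite dotvB dotvZ divfK // subrr.
  have hX : forall b, b \in X -> (cf b <= MX (T :\ k))%MS.
    move=> b hbX; case: (hb b hbX) => [hbT|hnI]; first exact: c_sub.
    apply: NNPP => hn; apply: hnI => -[t [/in_I_img [hs [w [hw0 hw]]] e]].
    rewrite e in hw; apply: hn; apply/spP => v' hv'.
    have hwk : perp (T :\ k) w by apply: perp_sub hw; exact: subsetUr.
    have cbv : dotv (cf b) v = 0.
      have := hw b (setU11 _ _); rewrite (od w hwk) dotvZ => /eqP; rewrite mulf_eq0.
      case/orP => [/eqP h0|/eqP //]; case/negP: hw0; apply/eqP; by rewrite (od w hwk) h0 scale0r.
    by rewrite (od v' hv') dotvZ cbv mulr0.
  have : (cf k <= MX (T :\ k))%MS by apply: submx_trans h (MX_subP hX).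
  move/spP/(_ v hv)/eqP; exact/negP.
move=> hQ; apply: NNPP => hn.
have h0 : \rank (MX set0) = #|(set0 : {set 'I_n.+1})|.
  apply/eqP; by rewrite cards0 -leqn0 -(cards0 'I_n.+1) rank_card.
have [Ja [_ ha2 ha3 ha4]] := greedy (enum X) h0.
have JaX : Ja \subset X.
  apply: subset_trans ha2 _; apply/subsetP => x; by rewrite !inE mem_enum.
have nk : ~ (cf k <= MX Ja)%MS by move=> h; apply: hn; exact: submx_trans h (MX_sub JaX).
have kJa : k \notin Ja by apply/negP => h; apply: nk; exact: c_sub.
have [T [hb1 _ hb3 hb4]] := greedy (enum [set: 'I_n.+1]) (add_indep ha3 nk).
have rT : \rank (MX T) = l.+1.
  apply/eqP; rewrite eqn_leq rank_leq_col /=.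
  have e := (NP_rank setT).1 (ess_NP ess).
  apply: leq_trans (mxrankS (_ : (MX setT <= MX T)%MS)); first by rewrite e.
  apply: MX_subP => b _; by apply: hb4; rewrite mem_enum inE.
have hT : #|T| = l.+1 by rewrite -hb3.
have NPT : NP T by apply/NP_rank.
have kT : k \in T by apply: (subsetP hb1); rewrite setU11.
have hTk : #|T :\ k| = l by move: hT; rewrite (cardsD1 k) kT add1n => -[].
apply: hQ; exists T; split=> //; first exact: IndI_of_NP.
move=> b hbX; case: (boolP (b \in T :\ k)) => hbT; [by left|right].
have JaT : Ja \subset T :\ k.
  apply/subsetP => x hx; rewrite !inE; apply/andP; split.
    by apply/negP => /eqP e; move: kJa; rewrite -e hx.
  apply: (subsetP hb1); by rewrite !inE hx orbT.
have hS : #|b |: (T :\ k)| = l.+1 by rewrite cardsU1 hbT hTk.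
have nNP : ~ NP (b |: (T :\ k)).
  move/NP_rank => e; have : (\rank (MX (b |: (T :\ k))) <= #|T :\ k|)%N.
    apply: leq_trans (rank_card _); apply: mxrankS; apply: MX_subP => x.
    rewrite !inE => /orP [/eqP ->|hx]; last by apply: c_sub; rewrite !inE.
    apply: submx_trans (MX_sub JaT); apply: ha4; by rewrite mem_enum.
  by rewrite e hTk ltnn.
by move/(IndI_NP hS).
Qed.


Lemma sp_witness X (u : 'rV[K]_l.+1) : ~ (u <= MX X)%MS -> exists v, perp X v /\ dotv u v != 0.
Proof.
move=> h; apply: NNPP => hn; apply: h; apply/spP => v hv; apply: NNPP => hd; apply: hn.
by exists v; split=> //; apply/eqP.
Qed.

Lemma Lsub_pt B C u : L_sub A B C -> perp (lft B) u -> u 0 ord_max = 1 ->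
  forall i, i \in C -> dotv (cf (lift ord_max i)) u = 0.
Proof.
move=> hL hu u1 i hi; have := hL (pt u); rewrite /inter => h.
have hx : inter A B (pt u) by apply/inter_perp; rewrite ext_pt.
by have := h hx i hi; move/on_hypE; rewrite ext_pt.
Qed.

Lemma Lsub_sp B C : L_sub A B C <->
  (cf ord_max <= MX (lft B))%MS \/ forall i, i \in C -> (cf (lift ord_max i) <= MX (lft B))%MS.
Proof.
split; last first.
  case=> h x hx.
    have := (spP _ _).1 h (ext x) ((inter_perp B x).1 hx).
    by rewrite dot_inf ext_last => /eqP; rewrite oner_eq0.
  move=> i hi; apply/on_hypE; exact: (spP _ _).1 (h i hi) _ ((inter_perp B x).1 hx).
move=> hL; case: (classic (cf ord_max <= MX (lft B))%MS) => h; [by left|right].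
have [v0 [hv0 d0]] := sp_witness h; rewrite dot_inf in d0.
pose w := (v0 0 ord_max)^-1 *: v0.
have w1 : w 0 ord_max = 1 by rewrite /w mxE mulVf.
have hw : perp (lft B) w by apply: perpZ.
clearbody w.
move=> i hi; apply/spP => v hv.
pose u := v + (1 - v 0 ord_max) *: w.
have u1 : u 0 ord_max = 1 by rewrite /u !mxE w1 mulr1 addrC subrK.
have hu : perp (lft B) u by apply: perpD => //; exact: perpZ.
have := Lsub_pt hL hu u1 hi; rewrite /u dotvD dotvZ (Lsub_pt hL hw w1 hi) mulr0 addr0.
done.
Qed.


Lemma mem_lft B i : (lift ord_max i \in lft B) = (i \in B).
Proof. apply: mem_imset; exact: lift_inj. Qed.

Lemma max_lft B : (ord_max \in lft B) = false.
Proof. apply/negP => /imsetP [i _ e]; by move: (neq_lift ord_max i); rewrite -e eqxx. Qed.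

Lemma perp_eq X Y v : X =i Y -> perp X v -> perp Y v.
Proof. move=> e h k hk; apply: h; by rewrite e. Qed.

Lemma inter_sub B C x : B \subset C -> inter A C x -> inter A B x.
Proof. move=> /subsetP h hx i hi; exact: hx (h _ hi). Qed.

Lemma Lsub_subset B C : C \subset B -> L_sub A B C.
Proof. move=> h x; exact: inter_sub. Qed.

Lemma cf_inf_last : cf ord_max 0 ord_max = 1.
Proof. by rewrite /cf /cone_form unlift_none mxE eqxx. Qed.

Lemma MXmulE X v k : (MX X *m v^T) k 0 = if k \in X then dotv (cf k) v else 0.
Proof.
rewrite !mxE; case: ifP => hk.
  apply: eq_bigr => j _; by rewrite !mxE hk.
by apply: big1 => j _; rewrite !mxE hk mul0r.
Qed.

Lemma R1 B x : inter A B x -> ~ (cf ord_max <= MX (lft B))%MS.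
Proof.
move=> hx h; have := (spP _ _).1 h (ext x) ((inter_perp B x).1 hx).
by rewrite dot_inf ext_last => /eqP; rewrite oner_eq0.
Qed.

Lemma normalize v : v 0 ord_max != 0 -> ((v 0 ord_max)^-1 *: v) 0 ord_max = 1.
Proof. move=> h; by rewrite mxE mulVf. Qed.

Definition Min (R : {set 'I_n} -> {set 'I_n} -> Prop) B :=
  forall C, R C B -> ~ R C setT -> R B C.

Lemma R2 B p : inter A B p -> (forall y, inter A B y -> y = p) -> Min (L_sub A) B.
Proof.
move=> hp hu C hCB hC x hx; rewrite (hu x hx).
have [z hz] : exists z, inter A C z.
  apply: NNPP => hn; apply: hC => y hy; exfalso; apply: hn; by exists y.
by rewrite -(hu z (hCB z hz)).
Qed.

Definition NCr := ~ exists x, inter A setT x.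

Lemma R3 B p q : essential A -> NCr -> Min (L_sub A) B -> inter A B p -> inter A B q -> q = p.
Proof.
move=> [B0 [x0 [hx0 hu0]]] nc hM hp hq; apply: NNPP => hne.
pose w := ext q - ext p.
have w0 : w 0 ord_max = 0 by rewrite /w !mxE !unlift_none subrr.
have wn : w != 0.
  apply/negP => /eqP e; apply: hne; apply: ext_inj; apply/eqP; by rewrite -subr_eq0 -/w e.
have pB : perp (lft B) (ext p) by apply/inter_perp.
have qB : perp (lft B) (ext q) by apply/inter_perp.
have wB : perp (lft B) w by apply: perpB.
have [k [hk dk]] : exists k, k \in B0 /\ dotv (cf (lift ord_max k)) w != 0.
  apply: NNPP => hn.
  pose u := ext x0 + w.
  have u1 : u 0 ord_max = 1 by rewrite /u mxE ext_last w0 addr0.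
  have : inter A B0 (pt u).
    apply/inter_perp; rewrite ext_pt // => k' /imsetP [i hi ->].
    rewrite /u dotvD ((inter_perp B0 x0).1 hx0) ?mem_lft // add0r.
    apply: NNPP => hd; apply: hn; exists i; split=> //; exact/eqP.
  move/hu0 => e; move: (ext_pt u1); rewrite e /u => e'.
  move/negP: wn; apply; apply/eqP.
  have := congr1 (fun z => z - ext x0) e'; by rewrite /= subrr [_ + w]addrC addrK.
pose s := - dotv (cf (lift ord_max k)) (ext p) / dotv (cf (lift ord_max k)) w.
pose u := ext p + s *: w.
have u1 : u 0 ord_max = 1 by rewrite /u mxE [(s *: w) 0 _]mxE ext_last w0 mulr0 addr0.
pose C := k |: B.
have hC : inter A C (pt u).
  apply/inter_perp; rewrite ext_pt // => k' /imsetP [i hi ->].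
  move: hi; rewrite !inE => /orP [/eqP ->|hi].
    by rewrite /u dotvD dotvZ /s divfK // addrC addNr.
  by rewrite /u dotvD dotvZ (pB _ (imset_f _ hi)) (wB _ (imset_f _ hi)) mulr0 addr0.
have hCB : L_sub A C B by apply: Lsub_subset; exact: subsetUr.
have hCT : ~ L_sub A C setT.
  move=> h; apply: nc; exists (pt u); exact: h.
have hBC := hM C hCB hCT.
have kC : k \in C by rewrite setU11.
have e1 := (on_hypE _ _).1 (hBC p hp k kC).
have e2 := (on_hypE _ _).1 (hBC q hq k kC).
by move: dk; rewrite /w dotvB e1 e2 subrr eqxx.
Qed.

Definition NC (R : {set 'I_n} -> {set 'I_n} -> Prop) :=
  exists f : nat -> {set 'I_n}, forall i, (i < l.+1)%N -> R (f i.+1) (f i) /\ ~ R (f i) (f i.+1).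

Lemma MX_lft_sub B C : (forall c, c \in C -> (cf (lift ord_max c) <= MX (lft B))%MS) ->
  (MX (lft C) <= MX (lft B))%MS.
Proof. move=> h; apply: MX_subP => k /imsetP [c hc ->]; exact: h. Qed.

Lemma Lsub_MX B C x : inter A B x -> L_sub A B C -> (MX (lft C) <= MX (lft B))%MS.
Proof. move=> hx /Lsub_sp [h|h]; [by case: (R1 hx h)|exact: MX_lft_sub]. Qed.

Lemma MX_Lsub B C : (MX (lft C) <= MX (lft B))%MS -> L_sub A B C.
Proof.
move=> h; apply/Lsub_sp; right => c hc; apply: submx_trans h; apply: c_sub; by rewrite mem_lft.
Qed.

Lemma NC_real : NC (L_sub A) -> NCr.
Proof.
move=> [f hf] [r hr].
have hrB : forall B, inter A B r by move=> B; apply: inter_sub hr; exact: subsetT.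
have hi : forall i, (i <= l.+1)%N -> (i <= \rank (MX (lft (f i))))%N.
  elim=> [//|i IH] hi.
  have [h1 h2] := hf i hi.
  have s1 := Lsub_MX (hrB _) h1.
  have s2 : ~ (MX (lft (f i.+1)) <= MX (lft (f i)))%MS by move=> h; apply: h2; exact: MX_Lsub.
  have := rank_ltmx (_ : (MX (lft (f i)) < MX (lft (f i.+1)))%MS).
  rewrite ltmxE s1 /=; move/negP: s2 => -> => /(_ isT) hlt.
  exact: leq_ltn_trans (IH (ltnW hi)) hlt.
have e : \rank (MX (lft (f l.+1))) = l.+1.
  apply/eqP; rewrite eqn_leq rank_leq_col; exact: hi.
have := (NP_rank _).2 e (ext r) ((inter_perp _ _).1 (hrB _)).
move/(congr1 (fun v => v 0 ord_max)); by rewrite ext_last mxE => /eqP; rewrite oner_eq0.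
Qed.

Lemma rank_B0 B0 x0 : inter A B0 x0 -> (forall y, inter A B0 y -> y = x0) ->
  (l <= \rank (MX (lft B0)))%N.
Proof.
move=> hx0 hu0.
have hsub : (kermx (MX (lft B0))^T <= ext x0)%MS.
  apply/row_subP => i; set r := row i _.
  have hr : perp (lft B0) r.
    apply/perp_MX; have := row_sub i (kermx (MX (lft B0))^T); rewrite sub_kermx -/r => /eqP e.
    apply: trmx_inj; by rewrite trmx_mul trmxK e trmx0.
  pose u := r - r 0 ord_max *: ext x0.
  have u0 : u 0 ord_max = 0 by rewrite /u !mxE unlift_none mulr1 subrr.
  have hu : perp (lft B0) u by apply: perpB => //; apply: perpZ; exact/inter_perp.
  have u' : (ext x0 + u) 0 ord_max = 1 by rewrite mxE ext_last u0 addr0.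
  have : inter A B0 (pt (ext x0 + u)).
    apply/inter_perp; rewrite ext_pt //; apply: perpD => //; exact/inter_perp.
  move/hu0 => e; move: (ext_pt u'); rewrite e => e'.
  have uz : u = 0.
    have := congr1 (fun z => z - ext x0) e'; by rewrite /= subrr [_ + u]addrC addrK.
  move: uz; rewrite /u => /eqP; rewrite subr_eq0 => /eqP ->; apply: scalemx_sub; exact: submx_refl.
have := mxrankS hsub; rewrite mxrank_ker mxrank_tr rank_rV => h.
have h1 : (l.+1 - \rank (MX (lft B0)) <= 1)%N by apply: leq_trans h _; case: (_ != 0).
by move: h1; rewrite leq_subLR addn1.
Qed.

Lemma real_NC : essential A -> NCr -> NC (L_sub A).
Proof.
move=> ess nc; have [B0 [x0 [hx0 hu0]]] := ess.
have [j hj] : exists j, ~ on_hyp (A j) x0.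
  apply: NNPP => hn; apply: nc; exists x0 => i _; apply: NNPP => h; apply: hn; by exists i.
have rB0 := rank_B0 hx0 hu0.
have chain : forall m, (m <= l)%N -> exists g : nat -> {set 'I_n},
    (forall i, (i <= m)%N -> g i \subset B0 /\ (#|g i| <= i)%N) /\
    (forall i, (i < m)%N -> g i \subset g i.+1 /\ ~ (MX (lft (g i.+1)) <= MX (lft (g i)))%MS).
  elim=> [_|m IH hm].
    exists (fun _ => set0); split=> [i _|i //]; by rewrite sub0set cards0.
  have [g [g1 g2]] := IH (ltnW hm).
  have [gB gc] := g1 m (leqnn m).
  have [b [hb nb]] : exists b, b \in B0 /\ ~ (cf (lift ord_max b) <= MX (lft (g m)))%MS.
    apply: NNPP => hn.
    have : (MX (lft B0) <= MX (lft (g m)))%MS.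
      apply: MX_lft_sub => c hc; apply: NNPP => h; apply: hn; by exists c.
    move/mxrankS => h.
    have := leq_trans (leq_trans h (rank_card _)) (leq_imset_card _ _).
    move/(leq_trans rB0) => h'; have := leq_trans h' gc; by rewrite leqNgt hm.
  exists (fun i => if i == m.+1 then b |: g m else g i); split.
    move=> i hi; case: eqP => [->|ne].
      split; first by rewrite subUset sub1set hb gB.
      rewrite cardsU1; exact: (leq_add (leq_b1 _) gc).
    apply: g1; by rewrite leq_eqVlt in hi; case/orP: hi => [/eqP|] //.
  move=> i hi; rewrite (ltn_eqF hi).
  case: (ltngtP i m) => [lt|gt|->]; last first.
  - rewrite eqxx; split; first exact: subsetUr.
    move=> h; apply: nb; apply: submx_trans h; apply: c_sub; by rewrite mem_lft setU11.
  - by move: hi; rewrite ltnS leqNgt gt.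
  - rewrite (ltn_eqF (_ : i.+1 < m.+1)%N) //; exact: g2.
have [g [g1 g2]] := chain l (leqnn l).
exists (fun i => if (i <= l)%N then g i else B0 :|: [set j]) => i hi.
have hx0g : forall i, (i <= l)%N -> inter A (g i) x0.
  move=> i' hi'; apply: inter_sub hx0; exact: (g1 i' hi').1.
rewrite ltnS in hi; rewrite hi.
case: (ltngtP i l) => [lt|gt|e]; last first.
- rewrite e ?ltnn; split.
    move=> x hx; exfalso; have hx' : inter A B0 x by apply: inter_sub hx; exact: subsetUl.
    apply: hj; rewrite -(hu0 x hx'); apply: hx; by rewrite !inE eqxx orbT.
  move=> h; apply: hj; apply: (h x0 (hx0g l (leqnn l))); by rewrite !inE eqxx orbT.
- by move: hi; rewrite leqNgt gt.
- have [s1 s2] := g2 i lt; split.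
    by apply: Lsub_subset.
  move=> h; apply: s2; exact: Lsub_MX (hx0g i hi) h.
Qed.

Definition T0 (X : {set 'I_n.+1}) : {set 'I_n} := [set i | lift ord_max i \in X].

Definition IndL (R : {set 'I_n} -> {set 'I_n} -> Prop) (t : {ffun 'I_l.+1 -> 'I_n.+1}) :=
  if ord_max \in img t then
    (NC R -> ~ R (T0 (img t)) setT /\ Min R (T0 (img t))) /\ (~ NC R -> R (T0 (img t)) setT)
  else NC R /\ exists j, j \in T0 (img t) /\ ~ R (T0 (img t) :\ j) [set j] /\ Min R (T0 (img t) :\ j).

Definition Phi (R : {set 'I_n} -> {set 'I_n} -> Prop) (t : {ffun 'I_l.+1 -> 'I_n.+1}) :=
  strict t /\ ~ IndL R t.

Lemma lft_T0 X : ord_max \notin X -> lft (T0 X) =i X.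
Proof.
move=> hX k; case: (unliftP ord_max k) => [i ->|->]; first by rewrite mem_lft inE.
by rewrite max_lft (negbTE hX).
Qed.

Lemma lft_T0D X j : ord_max \notin X -> lft (T0 X :\ j) =i X :\ lift ord_max j.
Proof.
move=> hX k; case: (unliftP ord_max k) => [i ->|->].
  by rewrite mem_lft !inE (inj_eq (@lift_inj _ ord_max)).
by rewrite max_lft !inE (negbTE hX) andbF.
Qed.

Lemma lft_T0inf X : lft (T0 X) =i X :\ ord_max.
Proof.
move=> k; case: (unliftP ord_max k) => [i ->|->].
  by rewrite mem_lft !inE eq_sym (negbTE (neq_lift _ _)).
by rewrite max_lft !inE eqxx.
Qed.

Definition Sing B := exists p, inter A B p /\ forall q, inter A B q -> q = p.

Lemma ext_sub_last p q : (ext q - ext p) 0 ord_max = 0.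
Proof. by rewrite !mxE !unlift_none subrr. Qed.

Lemma addv_eq (u v : 'rV[K]_l.+1) : u + v = u -> v = 0.
Proof. move=> e; have := congr1 (fun z => z - u) e; by rewrite /= subrr [u + v]addrC addrK. Qed.

Lemma ext_diff0 p q : ext q - ext p = 0 -> q = p.
Proof. move/eqP; rewrite subr_eq0 => /eqP; exact: ext_inj. Qed.

Lemma NP_inf X : ord_max \in X -> #|X| = l.+1 -> NP X <-> Sing (T0 X).
Proof.
move=> hX hc.
have hY : #|X :\ ord_max| = l by move: hc; rewrite (cardsD1 ord_max) hX add1n => -[].
have eY := lft_T0inf X.
split=> [h|[p [hp hu]] v hv].
  have [v [hv0 hv]] := small_nz (eq_leq hY).
  have vinf : v 0 ord_max != 0.
    apply/negP => /eqP v0; move/negP: hv0; apply; apply/eqP; apply: h => k hk.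
    case: (eqVneq k ord_max) => [->|ne]; first by rewrite dot_inf.
    apply: hv; by rewrite !inE ne.
  pose w := (v 0 ord_max)^-1 *: v.
  have w1 : w 0 ord_max = 1 by exact: normalize.
  have hw : perp (X :\ ord_max) w by exact: perpZ.
  exists (pt w); split.
    apply/inter_perp; rewrite ext_pt //; apply: perp_eq hw => k; by rewrite eY.
  move=> q hq; apply: ext_diff0; apply: h => k hk.
  case: (eqVneq k ord_max) => [->|ne]; first by rewrite dot_inf ext_sub_last.
  have kY : k \in X :\ ord_max by rewrite !inE ne.
  have hq' := perp_eq eY ((inter_perp _ _).1 hq).
  by rewrite dotvB (hq' _ kY) ext_pt // (hw _ kY) subrr.
have v0 : v 0 ord_max = 0 by rewrite -dot_inf; exact: hv.
pose u := ext p + v.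
have u1 : u 0 ord_max = 1 by rewrite /u mxE ext_last v0 addr0.
have hu' : inter A (T0 X) (pt u).
  apply/inter_perp; rewrite ext_pt //; apply: perpD; first exact/inter_perp.
  apply: perp_eq (fun k => esym (eY k)) _; apply: perp_sub hv; exact: subsetDl.
have := hu _ hu'; move/(congr1 ext); rewrite ext_pt // /u; exact: addv_eq.
Qed.

Lemma NP_NCr X : ord_max \notin X -> NP X -> NCr.
Proof.
move=> hX h [x hx].
have : ext x = 0.
  apply: h => k hk; case: (unliftP ord_max k) hk => [i ->|->]; last by rewrite (negbTE hX).
  move=> _; apply/on_hypE; exact: hx.
move/(congr1 (fun v => v 0 ord_max)); by rewrite ext_last mxE => /eqP; rewrite oner_eq0.
Qed.

Lemma NP_noinf X : ord_max \notin X -> #|X| = l.+1 -> NP X <->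
  exists j, j \in T0 X /\ exists p, [/\ inter A (T0 X :\ j) p,
     (forall q, inter A (T0 X :\ j) q -> q = p) & ~ on_hyp (A j) p].
Proof.
move=> hX hc; split=> [h|[j [hj [p [hp hu hn]]]] v hv].
  have : (cf ord_max <= MX X)%MS by apply/spP => v /h ->; exact: dotv0.
  case/submxP => D eD.
  have [k [hk Dk]] : exists k, k \in X /\ D 0 k != 0.
    apply: NNPP => hn.
    have : (D *m MX X) 0 ord_max = 0.
      rewrite mxE; apply: big1 => k _; rewrite mxE; case: ifP => hk; last by rewrite mulr0.
      have -> : D 0 k = 0 by apply: NNPP => hD; apply: hn; exists k; split=> //; apply/eqP.
      by rewrite mul0r.
    by rewrite -eD cf_inf_last => /eqP; rewrite oner_eq0.
  have [j ek] : exists j, k = lift ord_max j.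
    case: (unliftP ord_max k) => [j ->|e]; first by exists j.
    by move: hk; rewrite e (negbTE hX).
  subst k.
  have key : forall w, perp (X :\ lift ord_max j) w -> dotv (cf ord_max) w = D 0 (lift ord_max j) * dotv (cf (lift ord_max j)) w.
    move=> w hw; rewrite eD dotvE -mulmxA mxE (bigD1 (lift ord_max j)) //= big1 ?addr0.
      by rewrite MXmulE hk.
    move=> k' ne; rewrite MXmulE; case: ifP => h'; last by rewrite mulr0.
    by rewrite hw ?mulr0 // !inE ne h'.
  have hXk : #|X :\ lift ord_max j| = l by move: hc; rewrite (cardsD1 (lift ord_max j)) hk add1n => -[].
  have [v [hv0 hv]] := small_nz (eq_leq hXk).
  have perpX : forall w, perp (X :\ lift ord_max j) w -> dotv (cf (lift ord_max j)) w = 0 -> w = 0.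
    move=> w hw hkw; apply: h => k' hk'; case: (eqVneq k' (lift ord_max j)) => [->//|ne].
    apply: hw; by rewrite !inE ne.
  have ckv : dotv (cf (lift ord_max j)) v != 0.
    apply/negP => /eqP e; move/negP: hv0; apply; apply/eqP; exact: perpX.
  have vinf : v 0 ord_max != 0 by rewrite -dot_inf key // mulf_neq0.
  have eL := lft_T0D j hX.
  pose w := (v 0 ord_max)^-1 *: v.
  have w1 : w 0 ord_max = 1 by exact: normalize.
  have hw : perp (X :\ lift ord_max j) w by exact: perpZ.
  exists j; split; first by rewrite inE.
  exists (pt w); split.
  - apply/inter_perp; rewrite ext_pt //; apply: perp_eq hw => k'; by rewrite eL.
  - move=> q hq; apply: ext_diff0; apply: h => k' hk'.
    have hq' := perp_eq eL ((inter_perp _ _).1 hq).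
    have hd : perp (X :\ lift ord_max j) (ext q - ext (pt w)).
      apply: perpB => //; rewrite ext_pt //.
    case: (eqVneq k' (lift ord_max j)) => [->|ne]; last by apply: hd; rewrite !inE ne.
    have := key _ hd; rewrite dot_inf ext_sub_last => /esym/eqP; rewrite mulf_eq0 (negbTE Dk) /=.
    by move/eqP.
  - move/on_hypE; rewrite ext_pt // /w dotvZ => /eqP; rewrite mulf_eq0 invr_eq0 (negbTE vinf) /=.
    by rewrite (negbTE ckv).
have eL := lft_T0D j hX.
have v0 : v 0 ord_max = 0.
  apply: NNPP => /eqP vinf.
  pose w := (v 0 ord_max)^-1 *: v.
  have w1 : w 0 ord_max = 1 by exact: normalize.
  have hw : perp X w by exact: perpZ.
  have hT : inter A (T0 X) (pt w).
    apply/inter_perp; rewrite ext_pt //; apply: perp_eq hw => k; by rewrite lft_T0.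
  have := hu _ (inter_sub (subsetDl _ _) hT) => e.
  apply: hn; rewrite -e; apply: hT; exact: hj.
pose u := ext p + v.
have u1 : u 0 ord_max = 1 by rewrite /u mxE ext_last v0 addr0.
have hu' : inter A (T0 X :\ j) (pt u).
  apply/inter_perp; rewrite ext_pt //; apply: perpD; first exact/inter_perp.
  apply: perp_eq (fun k => esym (eL k)) _; apply: perp_sub hv; exact: subsetDl.
have := hu _ hu'; move/(congr1 ext); rewrite ext_pt // /u; exact: addv_eq.
Qed.

Lemma card_img t : strict t -> #|img t| = l.+1.
Proof.
move=> hs; rewrite /img card_imset ?card_ord //.
move=> i j e; apply: val_inj; case: (ltngtP i j) => // h.
- by have := hs _ _ h; rewrite e ltnn.
- by have := hs _ _ h; rewrite e ltnn.
Qed.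

Lemma IndL_iff t : essential A -> strict t -> IndL (L_sub A) t <-> NP (img t).
Proof.
move=> ess hs; have hc := card_img hs; rewrite /IndL.
case: ifP => hinf.
  rewrite (NP_inf hinf hc).
  case: (classic NCr) => nc.
    have NCL := real_NC ess nc.
    split=> [[h1 _]|[p [hp hu]]].
      have [h2 h3] := h1 NCL.
      have [p hp] : exists p, inter A (T0 (img t)) p.
        apply: NNPP => hn; apply: h2 => x hx; exfalso; apply: hn; by exists x.
      exists p; split=> // q hq; exact: R3 ess nc h3 hp hq.
    split=> [_|]; last by move=> h; case: (h NCL).
    split; last exact: R2 hp hu.
    move=> h; apply: nc; exists p; exact: h.
  have [r hr] : exists r, inter A setT r by exact: NNPP.
  have nNC : ~ NC (L_sub A) by move/NC_real.
  have [B0 [x0 [hx0 hu0]]] := ess.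
  have hrx : forall x, inter A setT x -> x = x0.
    move=> x hx; apply: hu0; apply: inter_sub hx; exact: subsetT.
  split=> [[_ h2]|[p [hp hu]]].
    have h := h2 nNC.
    exists r; split; first by apply: inter_sub hr; exact: subsetT.
    move=> q hq; by rewrite (hrx _ (h _ hq)) (hrx _ hr).
  split=> // _ x hx.
  have hr' : inter A (T0 (img t)) r by apply: inter_sub hr; exact: subsetT.
  by rewrite (hu _ hx) -(hu _ hr').
have hX : ord_max \notin img t by rewrite hinf.
rewrite (NP_noinf hX hc).
split=> [[nc [j [hj [h1 h2]]]]|[j [hj [p [hp hu hn]]]]].
  have ncr := NC_real nc.
  have [p [hp hn]] : exists p, inter A (T0 (img t) :\ j) p /\ ~ on_hyp (A j) p.
    apply: NNPP => hn; apply: h1 => x hx i; rewrite inE => /eqP ->.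
    apply: NNPP => h; apply: hn; by exists x.
  exists j; split=> //; exists p; split=> // q hq; exact: R3 ess ncr h2 hp hq.
have NP' : NP (img t) by apply/(NP_noinf hX hc); exists j; split=> //; exists p.
split; first exact: real_NC ess (NP_NCr hX NP').
exists j; split=> //; split; last exact: R2 hp hu.
move=> h; apply: hn; apply: (h p hp); by rewrite inE.
Qed.

Lemma in_I_Phi t : essential A -> in_I A t <-> Phi (L_sub A) t.
Proof.
move=> ess; rewrite in_I_img /Phi; split=> [[hs [v [hv0 hv]]]|[hs hn]]; split=> //.
  move/(IndL_iff ess hs) => h; move/negP: hv0; apply; apply/eqP; exact: h.
apply: not_NP; move=> h; apply: hn; exact/(IndL_iff ess hs).
Qed.

End Arr.

Lemma dir1 (K K' : fieldType) (l n : nat)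
  (A : 'I_n -> 'rV[K]_l * K) (A' : 'I_n -> 'rV[K']_l * K') :
  essential A -> essential A' ->
  (forall t : {ffun 'I_l.+1 -> 'I_n.+1}, in_I A t <-> in_I A' t) ->
  (forall B C : {set 'I_n}, L_sub A B C <-> L_sub A' B C).
Proof.
move=> eA eA' hI.
have E : in_I A = in_I A'.
  apply: functional_extensionality => t; apply: propositional_extensionality; exact: hI.
have hsp X k : (cf A k <= MX A X)%MS <-> (cf A' k <= MX A' X)%MS.
  rewrite (sp_QI _ _ eA) (sp_QI _ _ eA') E; done.
move=> B C; rewrite !Lsub_sp hsp.
split=> [[h|h]|[h|h]]; [by left|right|by left|right] => i hi; apply/hsp; exact: h.
Qed.

Lemma dir2 (K K' : fieldType) (l n : nat)
  (A : 'I_n -> 'rV[K]_l * K) (A' : 'I_n -> 'rV[K']_l * K') :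
  essential A -> essential A' ->
  (forall B C : {set 'I_n}, L_sub A B C <-> L_sub A' B C) ->
  (forall t : {ffun 'I_l.+1 -> 'I_n.+1}, in_I A t <-> in_I A' t).
Proof.
move=> eA eA' hL.
have E : L_sub A = L_sub A'.
  apply: functional_extensionality => B; apply: functional_extensionality => C.
  apply: propositional_extensionality; exact: hL.
move=> t; rewrite (in_I_Phi _ eA) (in_I_Phi _ eA') E; done.
Qed.

Theorem theorem3p4 (K K' : fieldType) (l n : nat)
  (A : 'I_n -> 'rV[K]_l * K) (A' : 'I_n -> 'rV[K']_l * K') :
  is_arrangement A -> is_arrangement A' ->
  essential A -> essential A' ->
  ((forall t : {ffun 'I_l.+1 -> 'I_n.+1}, in_I A t <-> in_I A' t) <->
   (forall B C : {set 'I_n}, L_sub A B C <-> L_sub A' B C)).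
Proof.
move=> _ _ eA eA'; split; [exact: dir1 | exact: dir2].
Qed.
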